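(* Let $a,b,e\in\mathbb Z$ with $a\neq0$, $e>0$, such that $h_2(j)=aj^2+bj+e$ satisfies $h_2(j)\ge0$ for all integers $j\ge0$ (so $h_2\in\mathcal H_0$). Then: (1) if $b\ge 0$, then $\operatorname{hdepth}(h_2)\le 8$; (2) if $b<0$ and $b^2\le 4ae$, then $\operatorname{hdepth}(h_2)\le 11$.
   Context: Let $\mathcal H_0$ denote the set of functions $h:\mathbb Z_{\ge 0}\to\mathbb Z_{\ge 0}$ with $h(0)>0$. For $h\in\mathcal H_0$ and integers $0\le k\le d$, put $\beta_k^d(h)=\sum_{j=0}^k(-1)^{k-j}\binom{d-j}{k-j}h(j)$. The Hilbert depth of $h$ is $\operatorname{hdepth}(h)=\max\{d\in\mathbb Z_{\ge0}:\ \beta_k^d(h)\ge 0\text{ for all }0\le k\le d\}$; this set contains $d=0$ and is known to be bounded above by $\lfloor h(1)/h(0)\rfloor$, so the maximum exists. *)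

(* Defs.v *)
From mathcomp Require Import all_boot all_order all_algebra.
Set Implicit Arguments. Unset Strict Implicit. Unset Printing Implicit Defensive.
Import Order.TTheory GRing.Theory Num.Theory.
Local Open Scope ring_scope.

(* Functions h : Z_{>=0} -> Z_{>=0} are represented as h : nat -> int
   (nonnegativity is imposed as a hypothesis where needed). *)

Definition beta (h : nat -> int) (k d : nat) : int :=
  \sum_(j < k.+1) (-1) ^+ (k - j) * ('C(d - j, k - j))%:R * h j.

Definition hdepth_ok (h : nat -> int) (d : nat) : Prop :=
  forall k : nat, (k <= d)%N -> 0 <= beta h k d.

Definition is_hdepth (h : nat -> int) (d : nat) : Prop :=
  hdepth_ok h d /\ forall d' : nat, hdepth_ok h d' -> (d' <= d)%N.

Definition h2 (a b e : int) (j : nat) : int := a * (j%:Z) ^+ 2 + b * j%:Z + e.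

(* Main.v *)
Require Import Defs.
From mathcomp Require Import all_boot all_order all_algebra.
From mathcomp Require Import ring lra zify.
Import Order.TTheory GRing.Theory Num.Theory.
Local Open Scope ring_scope.

Lemma beta_pascal (h : nat -> int) (k d : nat) : (k <= d)%N ->
  beta h k.+1 d.+1 = beta h k.+1 d - beta h k d.
Proof.
move=> kd; rewrite /beta big_ord_recr /= [in RHS]big_ord_recr /= !subnn.
rewrite !bin0 !expr0 !mul1r [RHS]addrAC; congr (_ + _).
rewrite -sumrB; apply: eq_bigr => -[j /= ltjk] _.
have jd : (j <= d)%N by apply: leq_trans kd; rewrite -ltnS.
rewrite subSn // subSn; last by rewrite -ltnS.
rewrite binS natrD exprS.
have -> : (k - j = (k - j).+1.-1)%N by [].
ring.
Qed.

Lemma beta_sum (h : nat -> int) (d k : nat) : (k <= d)%N ->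
  beta h k d = \sum_(i < k.+1) beta h i d.+1.
Proof.
elim: k => [|k IH] kd.
  by rewrite big_ord1 /beta !big_ord1 /= !bin0.
rewrite big_ord_recr /= -IH; last by apply: ltnW.
by rewrite (@beta_pascal h k d (ltnW kd)) addrC subrK.
Qed.

Lemma ok_down (h : nat -> int) (d : nat) : hdepth_ok h d.+1 -> hdepth_ok h d.
Proof.
move=> H k kd; rewrite beta_sum //; apply: sumr_ge0 => i _; apply: H.
have := ltn_ord i; lia.
Qed.

Lemma ok_le (h : nat -> int) (n d : nat) : (n <= d)%N -> hdepth_ok h d -> hdepth_ok h n.
Proof.
move=> nd; rewrite -(subnKC nd); elim: (d - n)%N => [|m IH]; first by rewrite addn0.
by rewrite addnS => /ok_down.
Qed.

Lemma b19 a b e : beta (h2 a b e) 1 9 = a + b - 8 * e.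
Proof.
rewrite /beta /h2 !big_ord_recr big_ord0 /= !subSS ?subn0 ?subnn ?bin0 ?bin1.
ring.
Qed.
Lemma b29 a b e : beta (h2 a b e) 2 9 = - 4 * a - 6 * b + 29 * e.
Proof.
rewrite /beta /h2 !big_ord_recr big_ord0 /= !subSS ?subn0 ?subnn ?bin0 ?bin1.
rewrite (_ : 'C(9,2) = 36)%N; last by [].
ring.
Qed.
Lemma b112 a b e : beta (h2 a b e) 1 12 = a + b - 11 * e.
Proof.
rewrite /beta /h2 !big_ord_recr big_ord0 /= !subSS ?subn0 ?subnn ?bin0 ?bin1.
ring.
Qed.
Lemma b212 a b e : beta (h2 a b e) 2 12 = - 7 * a - 9 * b + 56 * e.
Proof.
rewrite /beta /h2 !big_ord_recr big_ord0 /= !subSS ?subn0 ?subnn ?bin0 ?bin1.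
rewrite (_ : 'C(12,2) = 66)%N; last by [].
ring.
Qed.

Theorem theorem2p7 (a b e : int) :
  a != 0 -> 0 < e -> (forall j : nat, 0 <= h2 a b e j) ->
  (0 <= b -> forall d : nat, is_hdepth (h2 a b e) d -> (d <= 8)%N) /\
  (b < 0 -> b ^+ 2 <= 4 * a * e ->
     forall d : nat, is_hdepth (h2 a b e) d -> (d <= 11)%N).
Proof.
move=> _ e0 _; split.
  move=> b0 d [ok _]; rewrite leqNgt; apply/negP => d9.
  have ok9 := @ok_le _ 9 d d9 ok.
  have := ok9 1%N isT; have := ok9 2%N isT; rewrite b19 b29 => h1 h2'.
  lia.
move=> b0 bb d [ok _]; rewrite leqNgt; apply/negP => d12.
have ok12 := @ok_le _ 12 d d12 ok.
have := ok12 1%N isT; have := ok12 2%N isT; rewrite b112 b212 => h1 h2'.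
have hp : 0 <= e * (56 * e - 9 * b - 7 * a) by apply: mulr_ge0; lia.
nia.
Qed.
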